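(* Let $P\subseteq\mathbb{R}^n$ be a permutation-invariant polytope, $x'\in P$, and $\pi$ a permutation of $\{1,\dots,n\}$ with $x'_{\pi(i)}\ge x'_{\pi(i+1)}$ for all $i=1,\dots,n-1$. Then there exists $u'\in P$ with $u'\ge_m x'$ and $u'_\Delta\ne x'_\Delta$ if and only if there does not exist $a\in\mathbb{R}^n$ with $a_{\pi(i)}>a_{\pi(i+1)}$ for all $i=1,\dots,n-1$ such that the inequality $\sum_{i=1}^n a_i(x_i-x'_i)\le0$ holds for all $x\in P$.
   Context: $P$ is permutation-invariant if $x\in P$ implies $Qx\in P$ for every permutation matrix $Q$. $x_{[i]}$ is the $i$-th largest entry; $x\ge_m y$ means $\sum_{i=1}^j x_{[i]}\ge\sum_{i=1}^j y_{[i]}$ for $j<n$ with equality for $j=n$. $x_\Delta=(x_{[1]},\dots,x_{[n]})$. *)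

(* Defs.v *)
From HB Require Import structures.
From mathcomp Require Import all_boot all_order all_algebra all_fingroup.
Set Implicit Arguments. Unset Strict Implicit. Unset Printing Implicit Defensive.
Import Order.TTheory GRing.Theory Num.Theory.
Local Open Scope ring_scope.

Definition in_conv (R : realFieldType) (n : nat) (V : seq 'rV[R]_n) (x : 'rV[R]_n) : Prop :=
  exists w : 'I_(size V) -> R,
    (forall i, 0 <= w i) /\ \sum_(i < size V) w i = 1 /\
    x = \sum_(i < size V) w i *: V`_i.

Definition is_polytope (R : realFieldType) (n : nat) (P : 'rV[R]_n -> Prop) : Prop :=
  exists V : seq 'rV[R]_n, forall x, P x <-> in_conv V x.

Definition perm_invariant (R : realFieldType) (n : nat) (P : 'rV[R]_n -> Prop) : Prop :=
  forall x (s : 'S_n), P x -> P (col_perm s x).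

(* x_Delta : the entries of x sorted in nonincreasing order,
   so that (sortdesc x)`_(i-1) = x_[i] *)
Definition sortdesc (R : realFieldType) (n : nat) (x : 'rV[R]_n) : seq R :=
  sort (fun a b : R => b <= a) [seq x ord0 j | j <- enum 'I_n].

Definition majorizes (R : realFieldType) (n : nat) (x y : 'rV[R]_n) : Prop :=
  (forall j, (j < n)%N ->
     \sum_(i < j) (sortdesc y)`_i <= \sum_(i < j) (sortdesc x)`_i) /\
  \sum_(i < n) (sortdesc x)`_i = \sum_(i < n) (sortdesc y)`_i.

(* Main.v *)
Require Import Defs.
From HB Require Import structures.
From mathcomp Require Import all_boot all_order all_algebra all_fingroup.
From mathcomp Require Import ring lra.
From Stdlib Require Import Classical.
Import Order.TTheory GRing.Theory Num.Theory.
Local Open Scope ring_scope.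

Section Farkas.
Variables (R : realFieldType) (V : Type) (comb : R -> V -> V -> V).

Definition lin (f : V -> R) := forall c x y, f (comb c x y) = c * f x + f y.
Definition allnn (s : seq (V -> R)) x := forall g, List.In g s -> 0 <= g x.
Definition alllin (s : seq (V -> R)) := forall g, List.In g s -> lin g.

Fixpoint incone (s : seq (V -> R)) (f : V -> R) : Prop :=
  if s is a :: s' then exists mu, 0 <= mu /\ incone s' (fun x => f x - mu * a x)
  else forall x, f x = 0.

Lemma incone_ext s f g : (forall x, f x = g x) -> incone s f -> incone s g.
Proof.
elim: s f g => [|a s IH] f g /= E; first by move=> H x; rewrite -E.
case=> mu [mu0 H]; exists mu; split=> //; apply: IH H => x; by rewrite E.
Qed.

Lemma incone_nn s f x : incone s f -> allnn s x -> 0 <= f x.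
Proof.
elim: s f => [|a s IH] f /=; first by move=> H _; rewrite H.
case=> mu [mu0 H] A.
have h1 : 0 <= f x - mu * a x by apply: IH H _ => g Hg; apply: A; right.
have h2 : 0 <= mu * a x by rewrite mulr_ge0 //; apply: A; left.
lra.
Qed.

Lemma incone_lin s f : alllin s -> incone s f -> lin f.
Proof.
elim: s f => [|a s IH] f /= L.
  by move=> H c x y; rewrite !H; ring.
case=> mu [_ H].
have := IH _ (fun g Hg => L g (or_intror Hg)) H.
have La : lin a := L a (or_introl erefl).
move=> Lf c x y; have := Lf c x y; rewrite La => E; lra.
Qed.

Lemma lin0 f : lin f -> forall x, (forall y, 0 <= f y) -> f x = 0.
Proof.
move=> L x H; have := H (comb (-2%:R) x x); rewrite L => h1.
have := H x; lra.
Qed.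

Theorem farkas s f : alllin s -> lin f ->
  (forall x, allnn s x -> 0 <= f x) -> incone s f.
Proof.
move: {2}(size s) (erefl (size s)) => k; elim: k s f => [|k IH] [|a s] f //= Hk L Lf H.
  by move=> x; apply: lin0 => // y; apply: H => g [].
have La : lin a := L a (or_introl erefl).
have Ls : alllin s := fun g Hg => L g (or_intror Hg).
case: (classic (forall x, allnn s x -> 0 <= f x)) => [H1|H1].
  exists 0; split=> //; apply: incone_ext (IH s f _ Ls Lf H1) => [x|]; [ring|by case: Hk].
have [x0 Hx0] : exists x0, allnn s x0 /\ f x0 < 0.
  apply: NNPP => N; apply: H1 => x Hx; rewrite leNgt; apply/negP => Hl.
  by apply: N; exists x.
case: Hx0 => As0 fx0.
have ax0 : a x0 < 0.
  rewrite ltNge; apply/negP => Ha.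
  have : 0 <= f x0 by apply: H => g [<-|Hg] //; exact: As0.
  lra.
pose T x := comb (- (a x / a x0)) x0 x.
pose tr (g : V -> R) := fun x => g (T x).
have trE g : lin g -> forall x, tr g x = - (a x / a x0) * g x0 + g x.
  by move=> Lg x; rewrite /tr /T Lg.
have aT x : a (T x) = 0.
  rewrite /T La; have : a x0 != 0 by rewrite lt_eqF.
  by move=> nz; rewrite mulNr -mulrA mulVf // mulr1 addNr.
have Ltr g : lin g -> lin (tr g).
  move=> Lg c x y; rewrite !trE // La Lg; ring.
have Hpull : forall s' h, incone (map tr s') h ->
    exists g, incone s' g /\ forall x, h x = tr g x.
  elim=> [|b s' IH'] h /=.
    by move=> Hh; exists (fun _ => 0); split=> // x; rewrite Hh.
  case=> mu [mu0 Hh]; have [g' [Hg' E]] := IH' _ Hh.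
  exists (fun x => g' x + mu * b x); split.
    exists mu; split=> //; apply: incone_ext Hg' => x; ring.
  move=> x; have := E x; rewrite /tr => <-; ring.
have Lmap : alllin (map tr s).
  move=> g; elim: (s) Ls => [|b s' IH'] //= Lb [<-|Hg].
    by apply: Ltr; apply: Lb; left.
  by apply: IH' => // g0 Hg0; apply: Lb; right.
have Hmap : forall x, allnn (map tr s) x -> allnn s (T x).
  move=> x; rewrite /allnn; elim: (s) => [|b s' IH'] //= A g [<-|Hg].
    by apply: (A (tr b)); left.
  by apply: IH' => // g0 Hg0; apply: A; right.
have Hk' : size (map tr s) = k by rewrite size_map; case: Hk.
have Hin : incone (map tr s) (tr f).
  apply: (IH _ _ Hk' Lmap (Ltr f Lf)).
  move=> x Ax; apply: H => g [<-|Hg]; first by rewrite aT.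
  exact: Hmap Ax g Hg.
have [g [Hg E]] := Hpull _ _ Hin.
have Lg : lin g := @incone_lin s g Ls Hg.
have gx0 : 0 <= g x0 := @incone_nn s g x0 Hg As0.
exists ((f x0 - g x0) / a x0); split.
  by rewrite ler_ndivlMr // mul0r; lra.
apply: incone_ext Hg => x.
have := E x; rewrite !trE //.
have nz : a x0 != 0 by rewrite lt_eqF.
move=> Ex.
have -> : g x = f x + (a x / a x0) * g x0 - (a x / a x0) * f x0.
  by move: Ex; rewrite !mulNr; set p := (a x / a x0) * g x0; set q := (a x / a x0) * f x0; lra.
field; exact: nz.
Qed.
End Farkas.

Section Top.
Variable R : realFieldType.
Definition geR : rel R := fun a b => b <= a.
Lemma geR_tr : transitive geR.
Proof. by move=> y x z h1 h2; exact: le_trans h2 h1. Qed.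
Lemma geR_refl : reflexive geR.
Proof. by move=> x; exact: lexx. Qed.

Lemma topk (s w : seq R) j : sorted geR s -> perm_eq s w -> (j <= size s)%N ->
  \sum_(i < j) w`_i <= \sum_(i < j) s`_i.
Proof.
case: j => [|j] Hs Hp Hj; first by rewrite !big_ord0.
set c := s`_j.
pose pos x := if c <= x then x - c else 0.
have posP x : x <= c + pos x /\ 0 <= pos x.
  by rewrite /pos; case: (lerP c x) => h; split; lra.
have Hw : size w = size s by rewrite (perm_size Hp).
have mono a b : (a <= b < size s)%N -> s`_b <= s`_a.
  move=> /andP [hab hb].
  have ha : (a < size s)%N by exact: leq_ltn_trans hab hb.
  by apply: (sorted_leq_nth geR_tr geR_refl 0 Hs) hab; rewrite inE.
have E1 : \sum_(i < j.+1) w`_i <= \sum_(i < j.+1) (c + pos w`_i).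
  by apply: ler_sum => i _; case: (posP w`_i).
rewrite big_split sumr_const card_ord /= in E1.
have E2 : \sum_(i < j.+1) pos w`_i <= \sum_(i < size s) pos w`_i.
  rewrite (big_ord_widen (size s) (fun i => pos w`_i) Hj).
  rewrite [X in _ <= X](bigID (fun i : 'I_(size s) => (i < j.+1)%N)) /= lerDl.
  by apply: sumr_ge0 => i _; case: (posP w`_i).
have E3 : \sum_(i < size s) pos w`_i = \sum_(i < size s) pos s`_i.
  have -> : \sum_(i < size s) pos w`_i = \sum_(i < size w) pos w`_i by rewrite Hw.
  transitivity (\sum_(x <- w) pos x); first by rewrite (big_nth 0) big_mkord.
  by rewrite -(perm_big _ Hp) (big_nth 0) big_mkord.
have E4 : \sum_(i < size s) pos s`_i = \sum_(i < j.+1) (s`_i - c).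
  rewrite (big_ord_widen (size s) (fun i => s`_i - c) Hj).
  rewrite (bigID (fun i : 'I_(size s) => (i < j.+1)%N)) /= [X in _ + X]big1 ?addr0.
    apply: eq_bigr => i hi; rewrite /pos.
    by rewrite ifT //; apply: mono; apply/andP; split.
  move=> i; rewrite -leqNgt => hi; rewrite /pos.
  have h : s`_i <= c by apply: mono; apply/andP; split; [exact: ltnW | exact: ltn_ord].
  case: (lerP c s`_i) => h2 //.
  have -> : s`_i = c by apply/eqP; rewrite eq_le h h2.
  by rewrite subrr.
rewrite sumrB sumr_const card_ord in E4.
lra.
Qed.
End Top.

Module M1.
Set Implicit Arguments.

Section Vec.
Variables (R : realFieldType) (n : nat) (pi : 'S_n).
Implicit Types (y : 'rV[R]_n).

Definition dot (a y : 'rV[R]_n) := \sum_(i < n) a ord0 i * y ord0 i.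

Lemma dotDl c a b y : dot (c *: a + b) y = c * dot a y + dot b y.
Proof.
rewrite /dot mulr_sumr -big_split /=; apply: eq_bigr => i _; rewrite !mxE; ring.
Qed.
Lemma dotNl a y : dot (- a) y = - dot a y.
Proof. rewrite /dot -sumrN; apply: eq_bigr => i _; rewrite !mxE; ring. Qed.
Lemma dotDr a y z : dot a (y + z) = dot a y + dot a z.
Proof. rewrite /dot -big_split /=; apply: eq_bigr => i _; rewrite !mxE; ring. Qed.
Lemma dotBr a y z : dot a (y - z) = dot a y - dot a z.
Proof. rewrite /dot -sumrB /=; apply: eq_bigr => i _; rewrite !mxE; ring. Qed.
Lemma dotZr a c y : dot a (c *: y) = c * dot a y.
Proof. rewrite /dot mulr_sumr; apply: eq_bigr => i _; rewrite !mxE; ring. Qed.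
Lemma dot0r a : dot a 0 = 0.
Proof. rewrite /dot big1 // => i _; rewrite !mxE; ring. Qed.

Lemma conv_dot (m : nat) (w : 'I_m -> R) (v : 'I_m -> 'rV[R]_n) a x :
  \sum_i w i = 1 ->
  dot a (\sum_i w i *: v i - x) = \sum_i w i * dot a (v i - x).
Proof.
move=> Hw; rewrite dotBr (big_morph (dot a) (dotDr a) (dot0r a)).
have -> : \sum_i w i * dot a (v i - x) = \sum_i w i * dot a (v i) - (\sum_i w i) * dot a x.
  by rewrite mulr_suml -sumrB; apply: eq_bigr => i _; rewrite dotBr; ring.
by rewrite Hw mul1r; congr (_ - _); apply: eq_bigr => i _; rewrite dotZr.
Qed.

Lemma dot_sum (a x x' : 'rV[R]_n) : \sum_(i < n) a ord0 i * (x ord0 i - x' ord0 i) = dot a (x - x').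
Proof. by apply: eq_bigr => i _; rewrite !mxE. Qed.

Definition pseq (y : 'rV[R]_n) := [seq y ord0 (pi k) | k <- enum 'I_n].
Definition vals (y : 'rV[R]_n) := [seq y ord0 k | k <- enum 'I_n].
Definition Ysum j y := \sum_(i < j) (pseq y)`_i.

Lemma size_pseq y : size (pseq y) = n.
Proof. by rewrite size_map size_enum_ord. Qed.
Lemma nth_pseq y (i : 'I_n) : (pseq y)`_i = y ord0 (pi i).
Proof. by rewrite (nth_map i) ?size_enum_ord // nth_ord_enum. Qed.
Lemma YsumE j y : (j <= n)%N -> Ysum j y = \sum_(i < n | (i < j)%N) y ord0 (pi i).
Proof.
move=> hj; rewrite /Ysum (big_ord_widen n (fun i => (pseq y)`_i) hj).
by apply: eq_bigr => i _; rewrite nth_pseq.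
Qed.
Lemma YsumS k y (hk : (k < n)%N) : Ysum k.+1 y = Ysum k y + y ord0 (pi (Ordinal hk)).
Proof. by rewrite /Ysum big_ord_recr /= -(nth_pseq y (Ordinal hk)). Qed.

Lemma pseq_perm y : perm_eq (pseq y) (vals y).
Proof.
have -> : pseq y = map (y ord0) (map pi (enum 'I_n)).
  by rewrite /pseq; elim: (enum 'I_n) => //= ? ? ->.
apply: perm_map; apply: uniq_perm.
- by rewrite map_inj_uniq ?enum_uniq //; exact: perm_inj.
- exact: enum_uniq.
- move=> i; rewrite mem_enum; apply/mapP; exists (pi^-1 i)%g; first by rewrite mem_enum.
  by rewrite permKV.
Qed.

Lemma geR_total : total (@geR R).
Proof. by move=> a b; rewrite /geR le_total. Qed.
Lemma geR_anti : antisymmetric (@geR R).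
Proof. by move=> a b /andP [h1 h2]; apply/le_anti; rewrite /geR in h1 h2; rewrite h1 h2. Qed.

Lemma sortdescE y : sortdesc y = sort (@geR R) (vals y).
Proof. by []. Qed.

Lemma size_sortdesc y : size (sortdesc y) = n.
Proof. by rewrite sortdescE size_sort size_map size_enum_ord. Qed.

Lemma sortdesc_perm y : perm_eq (sortdesc y) (pseq y).
Proof. rewrite sortdescE perm_sort perm_sym; exact: pseq_perm. Qed.

Lemma sorted_sortdesc y : sorted (@geR R) (sortdesc y).
Proof. rewrite sortdescE; exact: sort_sorted geR_total _. Qed.

Lemma sortdesc_sorted (x' : 'rV[R]_n) :
  (forall i j : 'I_n, nat_of_ord j = (nat_of_ord i).+1 -> x' ord0 (pi j) <= x' ord0 (pi i)) ->
  sortdesc x' = pseq x'.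
Proof.
move=> Hx; rewrite sortdescE.
have -> : sort (@geR R) (vals x') = sort (@geR R) (pseq x').
  apply/(perm_sortP geR_total (@geR_tr R) geR_anti); rewrite perm_sym; exact: pseq_perm.
apply: sorted_sort; first exact: geR_tr.
apply/(sortedP 0) => i; rewrite size_pseq => hi.
have hi' : (i < n)%N by apply: ltnW.
have -> : (pseq x')`_i = x' ord0 (pi (Ordinal hi')) by rewrite -nth_pseq.
have -> : (pseq x')`_i.+1 = x' ord0 (pi (Ordinal hi)) by rewrite -nth_pseq.
rewrite /geR.
by apply: Hx.
Qed.

Lemma sum_nth (s : seq R) : \sum_(i < size s) s`_i = \sum_(x <- s) x.
Proof. by rewrite (big_nth 0) big_mkord. Qed.

Lemma sum_sortdesc y : \sum_(i < n) (sortdesc y)`_i = Ysum n y.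
Proof.
have h1 : \sum_(i < n) (sortdesc y)`_i = \sum_(i < size (sortdesc y)) (sortdesc y)`_i.
  by rewrite size_sortdesc.
have h2 : Ysum n y = \sum_(i < size (pseq y)) (pseq y)`_i by rewrite size_pseq.
by rewrite h1 h2 !sum_nth; apply: perm_big; exact: sortdesc_perm.
Qed.

Lemma Ysum_le_sortdesc y j : (j <= n)%N -> Ysum j y <= \sum_(i < j) (sortdesc y)`_i.
Proof.
move=> hj; apply: topk; first exact: sorted_sortdesc.
  exact: sortdesc_perm.
by rewrite size_sortdesc.
Qed.

End Vec.
Arguments dot {R n}.
Arguments dotDl {R n}.
Arguments dotNl {R n}.
Arguments dotDr {R n}.
Arguments dotBr {R n}.
Arguments dotZr {R n}.
Arguments dot0r {R n}.
Arguments conv_dot {R n}.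
Arguments dot_sum {R n}.
Arguments pseq {R n}.
Arguments vals {R n}.
Arguments Ysum {R n}.
Arguments size_pseq {R n}.
Arguments nth_pseq {R n}.
Arguments YsumE {R n}.
Arguments YsumS {R n}.
Arguments pseq_perm {R n}.
Arguments geR_total {R}.
Arguments geR_anti {R}.
Arguments sortdescE {R n}.
Arguments size_sortdesc {R n}.
Arguments sortdesc_perm {R n}.
Arguments sorted_sortdesc {R n}.
Arguments sortdesc_sorted {R n}.
Arguments sum_nth {R}.
Arguments sum_sortdesc {R n}.
Arguments Ysum_le_sortdesc {R n}.

End M1.
Import M1.

Section M2.
Variables (R : realFieldType) (n : nat) (pi : 'S_n) (x' : 'rV[R]_n).
Hypothesis Hx : forall i j : 'I_n, nat_of_ord j = (nat_of_ord i).+1 ->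
     x' ord0 (pi j) <= x' ord0 (pi i).

Lemma build (u : 'rV[R]_n) :
  (forall j, (j <= n)%N -> Ysum pi j x' <= Ysum pi j u) ->
  Ysum pi n u = Ysum pi n x' -> u <> x' ->
  majorizes u x' /\ sortdesc u <> sortdesc x'.
Proof.
move=> Hle Htot Hne.
have Sx := sortdesc_sorted pi x' Hx.
have Ex j : \sum_(i < j) (sortdesc x')`_i = Ysum pi j x' by rewrite Sx.
split.
  split.
    move=> j hj; rewrite Ex; apply: le_trans (Hle j (ltnW hj)) _.
    exact: Ysum_le_sortdesc (ltnW hj).
  by rewrite (sum_sortdesc pi) Htot -(sum_sortdesc pi).
move=> Heq; apply: Hne.
have Yeq j : (j <= n)%N -> Ysum pi j u = Ysum pi j x'.
  move=> hj; apply/le_anti; rewrite Hle // andbT.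
  by rewrite -Ex -Heq; exact: Ysum_le_sortdesc.
apply/rowP => i; rewrite -(permKV pi i); set k := (pi^-1 i)%g.
have h1 := YsumS pi k u (ltn_ord k); have h2 := YsumS pi k x' (ltn_ord k).
have Ek : Ordinal (ltn_ord k) = k by apply: val_inj.
rewrite Ek in h1 h2.
rewrite Yeq ?(ltn_ord k) // Yeq ?(ltnW (ltn_ord k)) // h2 in h1.
by move: h1 => /addrI.
Qed.

Lemma abel (al d : nat -> R) m :
  \sum_(k < m.+1) al k * d k =
  \sum_(j < m) (al j - al j.+1) * (\sum_(k < j.+1) d k) + al m * \sum_(k < m.+1) d k.
Proof.
elim: m => [|m IH]; first by rewrite !big_ord_recr !big_ord0 /=; ring.
rewrite big_ord_recr IH /= [in RHS]big_ord_recr /=.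
rewrite [\sum_(k < m.+2) d k]big_ord_recr /=; ring.
Qed.


Lemma easy_dir (P : 'rV[R]_n -> Prop) (u' a : 'rV[R]_n) :
  perm_invariant P -> P u' -> majorizes u' x' -> sortdesc u' <> sortdesc x' ->
  (forall i j : 'I_n, nat_of_ord j = (nat_of_ord i).+1 -> a ord0 (pi j) < a ord0 (pi i)) ->
  (forall x, P x -> dot a (x - x') <= 0) -> False.
Proof.
move=> Hinv Pu [Maj Tot] Hneq Ha Hle.
set idx := sort (relpre (u' ord0) (@geR R)) (enum 'I_n).
have Hsd : sortdesc u' = map (u' ord0) idx by rewrite sortdescE /vals sort_map.
have Hsz : size idx = n by rewrite size_sort size_enum_ord.
have Hu : uniq idx by rewrite sort_uniq enum_uniq.
pose tau (k : 'I_n) := nth k idx k.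
have tau_inj : injective tau.
  move=> k1 k2; rewrite /tau (set_nth_default k1 k2) ?Hsz // => /eqP.
  by rewrite nth_uniq ?Hsz // => /eqP; exact: val_inj.
pose sg := perm (inj_comp tau_inj (@perm_inj _ (pi^-1)%g)).
set u2 := col_perm sg u'.
have Pu2 : P u2 := Hinv u' sg Pu.
have Hu2 (k : 'I_n) : u' ord0 (sg (pi k)) = (sortdesc u')`_k.
  by rewrite permE /= permK Hsd (nth_map k) ?Hsz.
have Sx := sortdesc_sorted pi x' Hx.
pose al k := (pseq pi a)`_k.
pose d k := (sortdesc u')`_k - (sortdesc x')`_k.
have E : dot a (u2 - x') = \sum_(k < n) al k * d k.
  rewrite /dot (reindex_inj (@perm_inj _ pi)); apply: eq_bigr => k _.
  by rewrite /al /d !mxE Hu2 Sx !nth_pseq.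
have := Hle u2 Pu2; rewrite E.
have [m Hm] : exists m, n = m.+1.
  case En: n => [|m]; last by exists m.
  exfalso; apply: Hneq; apply: (@eq_from_nth _ 0); first by rewrite !size_sortdesc.
  by move=> i; rewrite size_sortdesc => hi; have : (i < 0)%N by rewrite -En.
pose D j := \sum_(k < j) d k.
have DE j : D j = \sum_(k < j) (sortdesc u')`_k - \sum_(k < j) (sortdesc x')`_k.
  by rewrite /D /d sumrB.
have Dn : D m.+1 = 0 by rewrite DE -Hm Tot subrr.
have Dpos j : (j < m)%N -> 0 <= D j.+1.
  move=> hj; rewrite DE subr_ge0; apply: Maj; rewrite Hm ltnS //.
have cpos j : (j < m)%N -> 0 < al j - al j.+1.
  move=> hj; have hj1 : (j.+1 < n)%N by rewrite Hm ltnS.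
  have hj0 : (j < n)%N by apply: ltnW.
  have e1 : al j = a ord0 (pi (Ordinal hj0)) := nth_pseq pi a (Ordinal hj0).
  have e2 : al j.+1 = a ord0 (pi (Ordinal hj1)) := nth_pseq pi a (Ordinal hj1).
  by rewrite e1 e2 subr_gt0; apply: Ha.
rewrite -(big_mkord xpredT (fun k => al k * d k)) Hm big_mkord abel.
rewrite -/(D m.+1) Dn mulr0 addr0 => Hs.
have Hterm (j : 'I_m) : 0 <= (al j - al j.+1) * D j.+1.
  by rewrite mulr_ge0 // ?Dpos // ltW // cpos.
have Hs0 : \sum_(j < m) (al j - al j.+1) * D j.+1 = 0.
  by apply/le_anti; rewrite Hs sumr_ge0.
have Dz j : (j <= n)%N -> D j = 0.
  case: j => [|j] hj; first by rewrite /D big_ord0.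
  rewrite Hm ltnS leq_eqVlt in hj; case/orP: hj => [/eqP -> //|hj].
  have := psumr_eq0P (fun i _ => Hterm i) Hs0 (i := Ordinal hj) isT.
  move/eqP; rewrite mulf_eq0 => /orP [|/eqP //].
  by rewrite (gt_eqF (cpos j hj)).
apply: Hneq; apply: (@eq_from_nth _ 0); first by rewrite !size_sortdesc.
rewrite size_sortdesc => i hi.
have : D i.+1 - D i = 0 by rewrite !Dz // ?subrr // ltnW.
rewrite /D big_ord_recr /= addrAC subrr add0r /d => /eqP.
by rewrite subr_eq0 => /eqP.
Qed.

End M2.

Lemma In_cat {T : Type} (g : T) s1 s2 : List.In g (s1 ++ s2) <-> List.In g s1 \/ List.In g s2.
Proof.
elim: s1 => [|a s1 IH] /=; first by split; [right|case].
rewrite IH; tauto.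
Qed.
Lemma In_catE {T : Type} {g : T} {s1 s2} : List.In g (s1 ++ s2) -> List.In g s1 \/ List.In g s2.
Proof. by move/In_cat. Qed.
Lemma In_catL {T : Type} (g : T) s1 s2 : List.In g s1 -> List.In g (s1 ++ s2).
Proof. by move=> H; apply/In_cat; left. Qed.
Lemma In_catR {T : Type} (g : T) s1 s2 : List.In g s2 -> List.In g (s1 ++ s2).
Proof. by move=> H; apply/In_cat; right. Qed.
Lemma In_map {T U : Type} {F : T -> U} {g l} :
  List.In g (map F l) -> exists x, g = F x /\ List.In x l.
Proof.
elim: l => [|a l IH] //= [<-|H]; first by exists a; split=> //; left.
by have [x [-> Hx]] := IH H; exists x; split=> //; right.
Qed.
Lemma In_map_intro {T U : Type} (F : T -> U) x l : List.In x l -> List.In (F x) (map F l).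
Proof. by elim: l => [|a l IH] //= [->|H]; [left|right; exact: IH]. Qed.
Lemma mem_In {T : eqType} (x : T) l : x \in l -> List.In x l.
Proof.
elim: l => [|a l IH] //; rewrite in_cons => /orP [/eqP ->|H]; [by left|right; exact: IH].
Qed.
Lemma In_mem {T : eqType} (x : T) l : List.In x l -> x \in l.
Proof.
elim: l => [|a l IH] //= [->|H]; rewrite in_cons ?eqxx //; apply/orP; right; exact: IH.
Qed.

Lemma incone_cat (R : realFieldType) (V : Type) (s1 s2 : seq (V -> R)) f :
  incone R V (s1 ++ s2) f ->
  exists g, incone R V s1 g /\ incone R V s2 (fun x => f x - g x).
Proof.
elim: s1 f => [|a s1 IH] f /=.
  move=> H; exists (fun _ => 0); split=> //; apply: incone_ext H => x; ring.
case=> mu [mu0 H]; have [g [Hg Hr]] := IH _ H.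
exists (fun x => g x + mu * a x); split.
  exists mu; split=> //; apply: incone_ext Hg => x; ring.
apply: incone_ext Hr => x; ring.
Qed.

Lemma incone_map_coef (R : realFieldType) (V : Type) (W : zmodType) (F : W -> V -> R)
   (Vs : seq W) g :
  incone R V (map F Vs) g ->
  exists mu : 'I_(size Vs) -> R, (forall i, 0 <= mu i) /\
    forall z, g z = \sum_i mu i * F (nth 0 Vs i) z.
Proof.
elim: Vs g => [|v Vs IH] g /=.
  by move=> H; exists (fun _ => 0); split=> // z; rewrite big_ord0 H.
case=> mu0 [h0 H]; have [mu [Hmu E]] := IH _ H.
exists (fun i : 'I_(size Vs).+1 => if unlift ord0 i is Some j then mu j else mu0).
split.
  by move=> i; case: (unlift ord0 i).
move=> z; rewrite big_ord_recl /= unlift_none.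
have -> : \sum_(i < size Vs)
    (if unlift ord0 (lift ord0 i) is Some j then mu j else mu0) *
      F (nth 0 (v :: Vs) (lift ord0 i)) z = \sum_i mu i * F (nth 0 Vs i) z.
  by apply: eq_bigr => i _; rewrite liftK lift0.
rewrite -E; ring.
Qed.

Theorem mainTheorem13 (R : realFieldType) (n : nat) (P : 'rV[R]_n -> Prop)
    (x' : 'rV[R]_n) (pi : 'S_n) :
  is_polytope P -> perm_invariant P -> P x' ->
  (forall i j : 'I_n, nat_of_ord j = (nat_of_ord i).+1 ->
     x' ord0 (pi j) <= x' ord0 (pi i)) ->
  ((exists u' : 'rV[R]_n, P u' /\ majorizes u' x' /\ sortdesc u' <> sortdesc x')
   <->
   ~ (exists a : 'rV[R]_n,
        (forall i j : 'I_n, nat_of_ord j = (nat_of_ord i).+1 ->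
           a ord0 (pi j) < a ord0 (pi i)) /\
        (forall x : 'rV[R]_n, P x ->
           \sum_(i < n) a ord0 i * (x ord0 i - x' ord0 i) <= 0))).
Proof.
move=> [Vs HV] Hinv Px' Hx.
split.
  case=> u' [Pu [Maj Neq]] [a [Ha Hle]].
  apply: (@easy_dir R n pi x' Hx P u' a Hinv Pu Maj Neq Ha) => x Px.
  by rewrite -dot_sum; exact: Hle.
move=> NR; apply: NNPP => NL; apply: NR.
pose V := ('rV[R]_n * R)%type.
pose comb (c : R) (z w : V) : V := (c *: z.1 + w.1, c * z.2 + w.2).
pose rf (v : 'rV[R]_n) : V -> R := fun z => - dot z.1 (v - x').
pose pairs := [seq ij <- [seq (i, j) | i <- enum 'I_n, j <- enum 'I_n]
                 | val ij.2 == (val ij.1).+1].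
pose qf (ij : 'I_n * 'I_n) : V -> R := fun z => z.1 ord0 (pi ij.1) - z.1 ord0 (pi ij.2) - z.2.
pose ef : V -> R := fun z => z.2.
pose ff : V -> R := fun z => - z.2.
pose s := map rf Vs ++ (map qf pairs ++ [:: ef]).
have pairsP (i j : 'I_n) : ((i, j) \in pairs) = (val j == (val i).+1).
  rewrite mem_filter /=; case: eqP => //= _.
  by apply/allpairsP; exists (i, j); rewrite !mem_enum.
have Lall : alllin R V comb s.
  move=> g Hg c z w; case/In_catE: Hg => [Hg|Hg].
    by have [v [-> _]] := In_map Hg; rewrite /rf /= dotDl; ring.
  case/In_catE: Hg => [Hg|[<-|//]].
    by have [ij [-> _]] := In_map Hg; rewrite /qf /= !mxE; ring.
  by rewrite /ef /=.
have Lf : lin R V comb ff by move=> c z w; rewrite /ff /=; ring.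
have restnn (z : V) : (forall i j : 'I_n, nat_of_ord j = (nat_of_ord i).+1 -> 0 <= qf (i, j) z) ->
    0 <= z.2 -> allnn R V (map qf pairs ++ [:: ef]) z.
  move=> H1 H2 g; case/In_catE => [Hg|[<-|//]] //.
  have [[i j] [-> Hij]] := In_map Hg.
  by apply: H1; apply/eqP; rewrite -pairsP; apply: In_mem.
have notcone : ~ incone R V s ff.
  move=> Hc; apply: NL.
  have [g [Hg Hrest]] := @incone_cat R V (map rf Vs) _ ff Hc.
  have [mu [mu0 Hmu]] := @incone_map_coef R V _ rf Vs g Hg.
  pose D a := \sum_i mu i * dot a (Vs`_i - x').
  have key (a : 'rV[R]_n) (t : R) : (forall i j : 'I_n, nat_of_ord j = (nat_of_ord i).+1 ->
                   t <= a ord0 (pi i) - a ord0 (pi j)) -> 0 <= t -> t <= D a.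
    move=> H1 H2.
    have Hq : forall i j : 'I_n, nat_of_ord j = (nat_of_ord i).+1 -> 0 <= qf (i, j) (a, t).
      by move=> i j Hij; rewrite /qf /= subr_ge0; apply: H1.
    have := @incone_nn R V _ _ (a, t) Hrest (restnn (a, t) Hq H2).
    rewrite /ff Hmu /=.
    have -> : \sum_i mu i * rf Vs`_i (a, t) = - D a.
      by rewrite /D -sumrN; apply: eq_bigr => i _; rewrite /rf /= mulrN.
    lra.
  pose astar : 'rV[R]_n := \row_i (- ((pi^-1 i)%g : nat)%:R).
  have Kstar : 1 <= D astar.
    apply: key => // i j Hij; rewrite !mxE !permK Hij -natr1; lra.
  pose M := \sum_i mu i.
  have M0 : 0 < M.
    rewrite lt_def sumr_ge0 // andbT; apply/eqP => HM.
    move: Kstar; rewrite /D big1 ?ler10 // => i _.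
    by rewrite (psumr_eq0P (fun i _ => mu0 i) HM) ?mul0r.
  have HM1 : \sum_i mu i / M = 1 by rewrite -mulr_suml divff // gt_eqF.
  pose u := \sum_i (mu i / M) *: Vs`_i.
  have Pu : P u.
    apply/HV; exists (fun i => mu i / M); split; last by split.
    by move=> i; rewrite divr_ge0 // ltW.
  have DM a : D a = M * dot a (u - x').
    rewrite /u conv_dot // mulr_sumr; apply: eq_bigr => i _.
    by rewrite mulrA mulrCA divff ?mulr1 // gt_eqF.
  pose aj j : 'rV[R]_n := \row_i (if ((pi^-1 i)%g < j)%N then 1 else 0).
  have dot_aj j y : (j <= n)%N -> dot (aj j) y = Ysum pi j y.
    move=> hj; rewrite YsumE // /dot (reindex_inj (@perm_inj _ pi)) [RHS]big_mkcond /=.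
    by apply: eq_bigr => i _; rewrite mxE permK; case: ifP => _; ring.
  have Yle j : (j <= n)%N -> Ysum pi j x' <= Ysum pi j u.
    move=> hj; have : 0 <= D (aj j).
      apply: key => // i k Hik; rewrite !mxE !permK Hik.
      case: (ltnP i.+1 j) => h1; first by rewrite (ltnW h1) subrr.
      by case: ifP => _; rewrite subr0.
    by rewrite DM pmulr_rge0 // dotBr !dot_aj // subr_ge0.
  have Ytot : Ysum pi n u = Ysum pi n x'.
    apply/le_anti; rewrite Yle // andbT.
    have : 0 <= D (- aj n).
      by apply: key => // i k Hik; rewrite !mxE !permK !ltn_ord; lra.
    by rewrite DM pmulr_rge0 // dotNl dotBr !dot_aj // oppr_ge0 subr_le0.
  have Hne : u <> x'.
    by move=> Eu; move: Kstar; rewrite DM Eu subrr dot0r mulr0 ler10.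
  have [Maj Neq] := @build R n pi x' Hx u Yle Ytot Hne.
  by exists u.
have : ~ (forall z, allnn R V s z -> 0 <= ff z).
  by move=> H; apply: notcone; exact: (@farkas R V comb s ff Lall Lf H).
move/not_all_ex_not => [[a t] Hz].
have [Hall Hf] : allnn R V s (a, t) /\ ff (a, t) < 0.
  apply: NNPP => N; apply: Hz => Ha; rewrite leNgt; apply/negP => Hlt; apply: N; by split.
have tpos : 0 < t by move: Hf; rewrite /ff /=; lra.
exists a; split.
  move=> i j Hij.
  have : 0 <= qf (i, j) (a, t).
    apply: Hall; apply: In_catR; apply: In_catL; apply: In_map_intro; apply: mem_In.
    by rewrite pairsP; apply/eqP.
  rewrite /qf /=; lra.
move=> x Px; rewrite dot_sum.
have [w [w0 [w1 ->]]] := (HV x).1 Px.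
rewrite conv_dot //; apply: sumr_le0 => i _; apply: mulr_ge0_le0 => //.
have : 0 <= rf Vs`_i (a, t).
  apply: Hall; apply: In_catL; apply: In_map_intro; apply: mem_In.
  exact: mem_nth.
rewrite /rf /=; lra.
Qed.
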